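(* Let $N\ge 2$, $\lambda\ne0$, and for $x,p\in\mathbb{C}^N$ set $$L_k(x,p;\lambda)=\begin{pmatrix}\lambda(e^{2p_k}+1)+x_k(e^{2p_k}-1) & (\lambda^2-x_k^2)(e^{2p_k}-1)\\ e^{2p_k}-1 & \lambda(e^{2p_k}+1)-x_k(e^{2p_k}-1)\end{pmatrix},\qquad T_N(x,p;\lambda)=L_N(x,p;\lambda)\cdots L_1(x,p;\lambda).$$ (a) Periodic case: if $\widetilde{x}\in\mathbb{C}^N$ satisfies $e^{2p_k}=\frac{\widetilde{x}_k-x_k+\lambda}{\widetilde{x}_k-x_k-\lambda}\cdot\frac{x_k-\widetilde{x}_{k-1}+\lambda}{x_k-\widetilde{x}_{k-1}-\lambda}$ for $k=1,\dots,N$ with $\widetilde x_0=\widetilde x_N$, $x_{N+1}=x_1$, then $$(2\lambda)^N\frac{\prod_{k=1}^N(\widetilde{x}_k-x_{k+1}-\lambda)}{\prod_{k=1}^N(\widetilde{x}_k-x_k-\lambda)}$$ is an eigenvalue of $T_N(x,p;\lambda)$. (b) Open-end case: if $e^{2p_1}=\frac{\widetilde{x}_1-x_1+\lambda}{\widetilde{x}_1-x_1-\lambda}$ and the relation in (a) holds for $k=2,\dots,N$, then the $(2,1)$-entry of $T_N(x,p;\lambda)$ equals $$(2\lambda)^N\frac{\prod_{k=1}^{N-1}(\widetilde{x}_k-x_{k+1}-\lambda)}{\prod_{k=1}^N(\widetilde{x}_k-x_k-\lambda)}.$$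
   Context: The relation between $(x,p)$ and $\widetilde x$ is the first half of the Bäcklund transformation $F_\lambda$ of the symmetric rational multiplicative Toda-type system $\ddot x_k=-(\dot x_k^2-1)\big(\frac{1}{x_{k+1}-x_k}-\frac{1}{x_k-x_{k-1}}\big)$. *)

(* Defs.v *)
From HB Require Import structures.
From mathcomp Require Import all_boot all_order all_algebra.
From mathcomp Require Import complex.
From mathcomp Require Import all_classical all_reals all_analysis.
Set Implicit Arguments. Unset Strict Implicit. Unset Printing Implicit Defensive.
Import Order.TTheory GRing.Theory Num.Theory.
Local Open Scope ring_scope.
Local Open Scope complex_scope.

Definition cexp (R : realType) (z : R[i]) : R[i] :=
  let: a +i* b := z in (expR a * cos b) +i* (expR a * sin b).

Definition Lmat (R : realType) (lam xk pk : R[i]) : 'M[R[i]]_2 :=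
  let E := cexp (2 * pk) in
  \matrix_(i < 2, j < 2)
    if (i : nat) == 0%N then
      (if (j : nat) == 0%N then lam * (E + 1) + xk * (E - 1)
       else (lam ^+ 2 - xk ^+ 2) * (E - 1))
    else
      (if (j : nat) == 0%N then E - 1
       else lam * (E + 1) - xk * (E - 1)).

(* monodromy T_N = L_N * ... * L_1 (indices 0-based: L_{N-1} ... L_0) *)
Definition Tmat (R : realType) (N : nat) (x p : 'I_N -> R[i]) (lam : R[i])
  : 'M[R[i]]_2 :=
  \prod_(i < N) Lmat lam (x (rev_ord i)) (p (rev_ord i)).

(* Main.v *)
Require Import Defs.
From HB Require Import structures.
From mathcomp Require Import all_boot all_order all_algebra.
From mathcomp Require Import complex.
From mathcomp Require Import all_classical all_reals all_analysis.
From mathcomp Require Import ring zify.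
Import Order.TTheory GRing.Theory Num.Theory.
Local Open Scope ring_scope.

Definition cv {R : realType} (c d : R[i]) : 'cV[R[i]]_2 :=
  \col_(i < 2) (if (i : nat) == 0%N then c else d).

Lemma stepL (R : realType) (lam xk pk xt xt' : R[i]) :
  xt - xk - lam != 0 -> xk - xt' - lam != 0 ->
  cexp (2 * pk) = (xt - xk + lam) / (xt - xk - lam) *
       ((xk - xt' + lam) / (xk - xt' - lam)) ->
  Lmat lam xk pk *m cv xt' 1 =
    (2 * lam * (xt' - xk - lam) / (xt - xk - lam)) *: cv xt 1.
Proof.
move=> h1 h2 hE; rewrite /Lmat hE; apply/matrixP => i j.
rewrite !mxE big_ord_recr big_ord_recr big_ord0 !mxE /=.
case: i => [[|[|//]]] _ /=; rewrite add0r; field; rewrite ?h1 ?h2 //.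
Qed.

Lemma step0 (R : realType) (lam xk pk xt : R[i]) :
  xt - xk - lam != 0 ->
  cexp (2 * pk) = (xt - xk + lam) / (xt - xk - lam) ->
  Lmat lam xk pk *m cv 1 0 = (2 * lam / (xt - xk - lam)) *: cv xt 1.
Proof.
move=> h1 hE; rewrite /Lmat hE; apply/matrixP => i j.
rewrite !mxE big_ord_recr big_ord_recr big_ord0 !mxE /=.
case: i => [[|[|//]]] _ /=; field; by rewrite h1.
Qed.

Lemma chain (K : comNzRingType) n (F : nat -> 'M[K]_2) (v : nat -> 'cV[K]_2)
  (mu : nat -> K) :
  (forall i, (i < n)%N -> F i *m v i = mu i *: v i.+1) ->
  (\prod_(i < n) F (n - i.+1)%N) *m v 0%N = (\prod_(i < n) mu i) *: v n.
Proof.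
elim: n => [|n IH] H.
  by rewrite !big_ord0 mul1mx scale1r.
rewrite big_ord_recl big_ord_recr /= subSS subn0 -mulmxE -mulmxA.
under eq_bigr => i _ do rewrite /bump /= add1n subSS.
rewrite IH; last by move=> i hi; apply: H; apply: ltnW.
by rewrite -scalemxAr H // scalerA mulrC.
Qed.

Lemma eig_det (F : fieldType) n (A : 'M[F]_n) a :
  eigenvalue A a = (\det (a%:M - A) == 0).
Proof.
  apply/eigenvalueP/det0P=> [[v Av_av v_nz] | [v v_nz Av_av]]; exists v => //.
    by rewrite mulmxBr Av_av mul_mx_scalar subrr.
  by apply/eqP; rewrite -mul_mx_scalar eq_sym -subr_eq0 -mulmxBr Av_av.
Qed.

Lemma eig_col (F : fieldType) n (A : 'M[F]_n) a (w : 'cV_n) :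
  w != 0 -> A *m w = a *: w -> eigenvalue A a.
Proof.
move=> wn Aw; rewrite eig_det -det_tr; apply/det0P; exists w^T.
  by rewrite trmx_eq0.
by rewrite -trmx_mul mulmxBl Aw mul_scalar_mx subrr trmx0.
Qed.

Theorem theorem15 (R : realType) (N : nat) (hN : (2 <= N)%N)
    (lam : R[i]) (hlam : lam != 0) (x p xt : 'I_N -> R[i]) :
  (* (a) periodic case *)
  ((forall k : 'I_N, xt k - x k - lam != 0) ->
   (forall k : 'I_N, x k - xt (ord_pred k) - lam != 0) ->
   (forall k : 'I_N, cexp (2 * p k) =
       (xt k - x k + lam) / (xt k - x k - lam) *
       ((x k - xt (ord_pred k) + lam) / (x k - xt (ord_pred k) - lam))) ->
   eigenvalue (Tmat x p lam)
     ((2 * lam) ^+ N * (\prod_(k < N) (xt k - x (ordS k) - lam))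
                    / (\prod_(k < N) (xt k - x k - lam))))
  /\
  (* (b) open-end case *)
  ((forall k : 'I_N, xt k - x k - lam != 0) ->
   (forall k : 'I_N, k != 0 :> nat -> x k - xt (ord_pred k) - lam != 0) ->
   (forall k : 'I_N, k = 0 :> nat ->
       cexp (2 * p k) = (xt k - x k + lam) / (xt k - x k - lam)) ->
   (forall k : 'I_N, k != 0 :> nat -> cexp (2 * p k) =
       (xt k - x k + lam) / (xt k - x k - lam) *
       ((x k - xt (ord_pred k) + lam) / (x k - xt (ord_pred k) - lam))) ->
   Tmat x p lam ord_max ord0 =
     (2 * lam) ^+ N * (\prod_(k < N | (k.+1 < N)%N) (xt k - x (ordS k) - lam))
                    / (\prod_(k < N) (xt k - x k - lam))).
Proof.
case: N hN x p xt => [|[|n]] // _ x p xt.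
pose X i := x (inord i); pose P i := p (inord i); pose XT i := xt (inord i).
pose XTp i := if i is j.+1 then XT j else XT n.+1.
have kp : forall i, (i < n.+2)%N -> xt (ord_pred (inord i)) = XTp i.
  case=> [|j] hj /=; rewrite /XT; congr xt; apply/val_inj; rewrite /= !inordK //;
    rewrite ?add0n ?addSn /= ?modnDr ?modn_small //; try lia.
have HT : Tmat x p lam =
    \prod_(i < n.+2) Lmat lam (X (n.+2 - i.+1)%N) (P (n.+2 - i.+1)%N).
  rewrite /Tmat; apply: eq_bigr => i _.
  have -> : rev_ord i = inord (n.+2 - i.+1) by apply/val_inj; rewrite /= inordK // rev_ord_proof.
  by [].
have Bq : \prod_(i < n.+2) (XT i - X i - lam) = \prod_(k < n.+2) (xt k - x k - lam).
  by apply: eq_bigr => i _; rewrite /XT /X inord_val.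
split.
- move=> h1 h2 hE.
  pose v i := if i is j.+1 then cv (XT j) 1 else cv (XT n.+1) 1.
  pose mu i := 2 * lam * (XTp i - X i - lam) / (XT i - X i - lam).
  have Hc := @chain _ n.+2 (fun i => Lmat lam (X i) (P i)) v mu.
  rewrite -HT in Hc.
  have hs : forall i, (i < n.+2)%N ->
      Lmat lam (X i) (P i) *m v i = mu i *: v i.+1.
    move=> i hi; have -> : v i = cv (XTp i) 1 by case: i hi.
    rewrite /mu; apply: stepL; rewrite -?kp //; [exact: h1 | exact: h2 | exact: hE].
  have eq := Hc hs; clear Hc.
  rewrite [v n.+2]/= -/(v 0%N) in eq.
  have Hmu : (2 * lam) ^+ n.+2 * \prod_(k < n.+2) (xt k - x (ordS k) - lam) /
     \prod_(k < n.+2) (xt k - x k - lam) = \prod_(i < n.+2) mu i.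
    rewrite /mu !big_split /= !prodr_const card_ord prodfV Bq exprMn; congr (_ * _ * _).
    rewrite (reindex_inj (@ord_pred_inj _)) /=; apply: eq_bigr => k _.
    by rewrite ord_predK -kp // /X inord_val.
  have vnz : v 0%N != 0.
    apply/negP => /eqP /matrixP /(_ 1 0); rewrite !mxE /= => /eqP; by rewrite oner_eq0.
  by rewrite Hmu; apply: (@eig_col _ _ _ _ _ vnz eq).
- move=> h1 h2 hE0 hE.
  pose v i := if i is j.+1 then cv (XT j) 1 else cv 1 0.
  pose A i := if i is j.+1 then XT j - X i - lam else 1.
  pose mu i := 2 * lam * A i / (XT i - X i - lam).
  have Hc := @chain _ n.+2 (fun i => Lmat lam (X i) (P i)) v mu.
  rewrite -HT in Hc.
  have hs : forall i, (i < n.+2)%N ->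
      Lmat lam (X i) (P i) *m v i = mu i *: v i.+1.
    case=> [|j] hi.
      rewrite /mu /= mulr1; apply: step0; first exact: h1.
      by apply: hE0; rewrite /= inordK.
    have hj : (inord j.+1 : 'I_n.+2) != 0 :> nat by rewrite inordK.
    have kj : xt (ord_pred (inord j.+1)) = XT j by apply: (kp j.+1).
    rewrite /mu /v /A; apply: stepL; first exact: h1.
      by rewrite /X -kj; apply: h2.
    by rewrite /X -kj; apply: hE.
  have eq := Hc hs; clear Hc.
  have -> : Tmat x p lam ord_max ord0 = (Tmat x p lam *m v 0%N) ord_max ord0.
    rewrite !mxE big_ord_recr big_ord_recr big_ord0 !mxE /= mulr1 mulr0 addr0 add0r.
    by congr (_ _ _); apply/val_inj.
  rewrite eq mxE /= mxE /= mulr1.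
  rewrite /mu !big_split /= !prodr_const card_ord prodfV Bq exprMn; congr (_ * _ * _).
  rewrite [RHS]big_mkcond [RHS]big_ord_recr /= ltnn mulr1 [LHS]big_ord_recl /= mul1r.
  apply: eq_bigr => i _; rewrite ltnS ltn_ord.
  have hi := ltn_ord i.
  rewrite /XT /X /bump /= add0n add1n; congr (xt _ - x _ - _); apply/val_inj;
    rewrite /= inordK ?modn_small //; lia.
Qed.
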